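(* Let $Y\in\mathbb{R}^{D\times N}$ (the data matrix after subtracting the sample mean of the columns from each column), let $\hat d\in\mathbb{N}$, $\hat d\ge1$, and let $\epsilon>0$. Define $$f(L,R,\Pi)=\tfrac12\|(Y-LR')\Pi^{-1/2}\|_F^2+\tfrac D2\log|\Pi|$$ on the feasible set $\mathcal S=\mathcal S_L\times\mathcal S_R\times\mathcal S_\Pi$, where $\mathcal S_L=\mathbb{R}^{D\times\hat d}$, $\mathcal S_R=\mathbb{R}^{N\times\hat d}$, and $\mathcal S_\Pi$ is the set of $N\times N$ diagonal matrices with all diagonal entries in $[\epsilon,\infty)$, and consider the problem $\min f(L,R,\Pi)$ subject to $(L,R,\Pi)\in\mathcal S$. Initialize as follows: with $Y=\hat U\hat\Sigma\hat V'$ an SVD, set $L_0=\hat U_{1:\hat d}\hat\Sigma_{1:\hat d}^{1/2}$, $R_0=\hat V_{1:\hat d}\hat\Sigma_{1:\hat d}^{1/2}$, $\nu_0=\max\!\big(\max_j \tfrac1D\|(Y-L_0R_0')e_j\|_2^2,\ \epsilon\big)$ and $\Pi_0=\nu_0 I$. Then generate $\{(L_t,R_t,\Pi_t)\}$ by alternating minimization (block nonlinear Gauss–Seidel), each block being updated to an exact minimizer of $f$ over its feasible set with the other blocks at their most recent values: $$L_{t+1}=Y\Pi_t^{-1}R_t(R_t'\Pi_t^{-1}R_t)^{-1},\quad R_{t+1}=Y'L_{t+1}(L_{t+1}'L_{t+1})^{-1},$$ $$(\Pi_{t+1})_{jj}=\max\!\Big(\tfrac1D\|(Y-L_{t+1}R_{t+1}')e_j\|_2^2,\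 \epsilon\Big),\ j=1,\dots,N.$$ Then the limit points of the sequence $\{(L_t,R_t,\Pi_t)\}$ are critical points of this constrained problem.
   Context: $\|\cdot\|_F$ is the Frobenius norm, $|\Pi|$ the determinant, $e_j$ the $j$-th standard basis vector, $\hat U_{1:\hat d}$, $\hat V_{1:\hat d}$ the first $\hat d$ left/right singular vectors and $\hat\Sigma_{1:\hat d}$ the corresponding $\hat d\times\hat d$ diagonal matrix of largest singular values. A critical point of $\min_{w\in\mathcal S}f(w)$ (with $f$ continuously differentiable and $\mathcal S$ closed and convex) is a point $w^*\in\mathcal S$ with $\langle\nabla f(w^* ),w-w^*\rangle\ge0$ for all $w\in\mathcal S$. The matrix inverses in the updates are assumed to exist. *)

(* Defs.v *)
From HB Require Import structures.
From mathcomp Require Import all_boot all_order all_algebra.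
From mathcomp Require Import all_classical all_reals all_analysis.
Set Implicit Arguments. Unset Strict Implicit. Unset Printing Implicit Defensive.
Import Order.TTheory GRing.Theory Num.Theory.
Import numFieldNormedType.Exports.
Local Open Scope ring_scope.
Local Open Scope classical_set_scope.

(* The diagonal matrix Pi (N x N) is represented by its diagonal p : 'rV_N. *)
Definition var_t (R : realType) (D N d : nat) : Type :=
  ('M[R]_(D, d) * 'M[R]_(N, d) * 'rV[R]_N)%type.

Definition fobj (R : realType) (D N d : nat) (Y : 'M[R]_(D, N))
  (w : var_t R D N d) : R :=
  let: (L, Rm, p) := w in
  2^-1 * (\sum_(i < D) \sum_(j < N) ((Y - L *m Rm^T) i j) ^+ 2 / p 0 j)
  + D%:R / 2 * \sum_(j < N) ln (p 0 j).

Definition feas (R : realType) (D N d : nat) (eps : R) : set (var_t R D N d) :=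
  [set w : var_t R D N d | forall j : 'I_N, eps <= w.2 0 j].

(* critical point of min_{w in S} f : wstar in S and <grad f(wstar), w - wstar> >= 0,
   the inner product with the gradient being the differential 'd f wstar. *)
Definition critical_point (R : realType) (D N d : nat)
  (f : var_t R D N d -> R) (S : set (var_t R D N d)) (ws : var_t R D N d) :=
  [/\ S ws, differentiable f ws & forall w, S w -> 0 <= 'd f ws (w - ws)].

Definition colres (R : realType) (D N d : nat) (Y : 'M[R]_(D, N))
  (L : 'M[R]_(D, d)) (Rm : 'M[R]_(N, d)) (j : 'I_N) : R :=
  D%:R^-1 * \sum_(i < D) ((Y - L *m Rm^T) i j) ^+ 2.

Definition diag_inv (R : realType) (N : nat) (p : 'rV[R]_N) : 'M[R]_N :=
  diag_mx (\row_j (p 0 j)^-1).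

(* Main.v *)
Require Import Defs.
From HB Require Import structures.
From mathcomp Require Import all_boot all_order all_algebra.
From mathcomp Require Import all_classical all_reals all_analysis.
From mathcomp Require Import lra ring.
Import Order.TTheory GRing.Theory Num.Theory.
Import numFieldNormedType.Exports.
Local Open Scope ring_scope.
Local Open Scope classical_set_scope.
Section S.
Context {R : realType}.
Lemma diff_fst (U W : normedModType R) (x : U * W) : differentiable (@fst U W) x.
Proof.
have lin : linear (@fst U W) by move=> a [u1 w1] [u2 w2].
pose fl := GRing.isLinear.Build _ _ _ _ _ lin.
pose f : {linear _ -> _} := HB.pack (@fst U W) fl.
rewrite (_ : fst = f) //; apply/linear_differentiable => y; exact: cvg_fst.
Qed.
Lemma diff_snd (U W : normedModType R) (x : U * W) : differentiable (@snd U W) x.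
Proof.
have lin : linear (@snd U W) by move=> a [u1 w1] [u2 w2].
pose fl := GRing.isLinear.Build _ _ _ _ _ lin.
pose f : {linear _ -> _} := HB.pack (@snd U W) fl.
rewrite (_ : snd = f) //; apply/linear_differentiable => y; exact: cvg_snd.
Qed.

Section D.
Variable V : normedModType R.
Implicit Types (f g : V -> R) (x : V).
Lemma dM f g x : differentiable f x -> differentiable g x -> differentiable (fun y => f y * g y) x.
Proof. exact: differentiableM. Qed.
Lemma dD f g x : differentiable f x -> differentiable g x -> differentiable (fun y => f y + g y) x.
Proof. exact: differentiableD. Qed.
Lemma dB f g x : differentiable f x -> differentiable g x -> differentiable (fun y => f y - g y) x.
Proof. exact: differentiableB. Qed.
Lemma dC (a : R) x : differentiable (fun _ : V => a) x.
Proof. exact: differentiable_cst. Qed.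
Lemma dS n (F : 'I_n -> V -> R) x : (forall i, differentiable (F i) x) ->
  differentiable (fun y => \sum_(i < n) F i y) x.
Proof. by move=> H; rewrite -fct_sumE; apply: differentiable_sum. Qed.
Lemma dV f x : differentiable f x -> f x != 0 -> differentiable (fun y => (f y)^-1) x.
Proof. exact: differentiableV. Qed.
Lemma dX2 f x : differentiable f x -> differentiable (fun y => f y ^+ 2) x.
Proof. by move=> H; have := differentiableX 1 H; rewrite -exprfctE. Qed.
Lemma dln f x : differentiable f x -> 0 < f x -> differentiable (fun y => ln (f y)) x.
Proof.
move=> H fx; apply: (differentiable_comp H).
by apply/derivable1_diffP; apply: ex_derive; apply: is_derive1_ln.
Qed.
End D.
Lemma dir_ge0 (V : normedModType R) (f : V -> R) x v : differentiable f x ->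
  (forall h : R, 0 < h -> h <= 1 -> f x <= f (h *: v + x)) -> 0 <= 'd f x v.
Proof.
move=> df H; rewrite -deriveE //.
have dv : derivable f x v := diff_derivable df.
rewrite /derive cvg_at_rightE //.
apply: limr_ge.
  apply/cvg_ex; exists (lim ((fun h => h^-1 *: ((f \o shift x) (h *: v) - f x)) @ 0^')).
  move=> A /dv /nbhs_ballP [_ /posnumP[e] xe_A].
  by exists e%:num => //= y xe_y /gt_eqF/negbT/xe_A; exact.
near=> h.
have h0 : 0 < h by near: h; exact: nbhs_right_gt.
have h1 : h < 1 by near: h; exact: nbhs_right_lt.
rewrite /= /shift; apply: mulr_ge0; first by rewrite invr_ge0 ltW.
by rewrite subr_ge0; apply: H => //; rewrite ltW.
Unshelve. all: by end_near.
Qed.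
Lemma pi_step (c Dr eps q : R) : 0 <= c -> 0 < Dr -> 0 < eps -> eps <= q ->
  2^-1 * (c / Num.max (Dr^-1 * c) eps) + Dr / 2 * ln (Num.max (Dr^-1 * c) eps)
  <= 2^-1 * (c / q) + Dr / 2 * ln q.
Proof.
move=> c0 D0 e0 eq.
set a := Num.max _ _.
have a0 : 0 < a by rewrite lt_max e0 orbT.
have q0 : 0 < q by apply: lt_le_trans eq.
have key : 0 <= (a - q) * (c - Dr * a).
  rewrite /a; case: (leP (Dr^-1 * c) eps) => h.
    apply: mulr_le0; first by rewrite subr_le0.
    by rewrite subr_le0 -ler_pdivrMl // mulrC.
  by rewrite mulVKf ?lt0r_neq0 // subrr mulr0.
have hl : ln a - ln q <= a / q - 1.
  have aq0 : 0 < a / q by rewrite divr_gt0.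
  rewrite -ln_div ?posrE //.
  have := @le_ln1Dx _ (a / q - 1); rewrite [1 + _]addrC subrK; apply.
  lra.
have he : c / q - c / a + Dr * (1 - a / q) = (a - q) * (c - Dr * a) / (a * q).
  by field; rewrite ?lt0r_neq0 //; rewrite mulf_neq0 // lt0r_neq0.
have hk : 0 <= (a - q) * (c - Dr * a) / (a * q) by rewrite divr_ge0 // mulr_ge0 // ltW.
have hm : Dr * (ln a - ln q) <= Dr * (a / q - 1) by rewrite ler_pM2l.
rewrite -he in hk.
lra.
Qed.
Section A.
Variables (D N d : nat).

Definition Q (E : 'M[R]_(D, N)) (p : 'rV[R]_N) :=
  \sum_(i < D) \sum_(j < N) E i j ^+ 2 / p 0 j.

Lemma quad_ge (E0 Dl : 'M[R]_(D, N)) (p : 'rV[R]_N) : (forall j, 0 < p 0 j) ->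
  \sum_i \sum_j E0 i j * Dl i j / p 0 j = 0 -> Q E0 p <= Q (E0 - Dl) p.
Proof.
move=> pos cr.
have e : Q (E0 - Dl) p = Q E0 p + (- 2) * (\sum_i \sum_j E0 i j * Dl i j / p 0 j)
   + \sum_i \sum_j Dl i j ^+ 2 / p 0 j.
  rewrite /Q mulr_sumr -!big_split /=; apply: eq_bigr => i _.
  rewrite mulr_sumr -!big_split /=; apply: eq_bigr => j _.
  rewrite !mxE; ring.
rewrite e cr mulr0 addr0 lerDl; apply: sumr_ge0 => i _; apply: sumr_ge0 => j _.
by rewrite divr_ge0 ?sqr_ge0 // ltW.
Qed.

Definition T3 (A : 'M[R]_(D, N)) (B : 'M[R]_(D, d)) (C : 'M[R]_(N, d)) (p : 'rV[R]_N) :=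
  \sum_(i < D) \sum_(j < N) \sum_(k < d) A i j * B i k * C j k / p 0 j.

Lemma cross_T3 (A : 'M[R]_(D, N)) (B : 'M[R]_(D, d)) (C : 'M[R]_(N, d)) (p : 'rV[R]_N) :
  \sum_i \sum_j A i j * (B *m C^T) i j / p 0 j = T3 A B C p.
Proof.
apply: eq_bigr => i _; apply: eq_bigr => j _.
rewrite !mxE mulr_sumr mulr_suml; apply: eq_bigr => k _; rewrite !mxE; ring.
Qed.

Lemma cross1 (A : 'M[R]_(D, N)) (B : 'M[R]_(D, d)) (C : 'M[R]_(N, d)) (p : 'rV[R]_N) :
  T3 A B C p = \sum_i \sum_k B i k * (A *m diag_inv p *m C) i k.
Proof.
apply: eq_bigr => i _; rewrite exchange_big /=; apply: eq_bigr => k _.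
rewrite !mxE mulr_sumr; apply: eq_bigr => j _.
rewrite /diag_inv mul_mx_diag !mxE; ring.
Qed.

Lemma cross2 (A : 'M[R]_(D, N)) (B : 'M[R]_(D, d)) (C : 'M[R]_(N, d)) (p : 'rV[R]_N) :
  T3 A B C p = \sum_j \sum_k C j k * (B^T *m A) k j / p 0 j.
Proof.
rewrite /T3 exchange_big /=; apply: eq_bigr => j _.
rewrite exchange_big /=; apply: eq_bigr => k _.
rewrite !mxE mulr_sumr mulr_suml; apply: eq_bigr => i _; rewrite !mxE; ring.
Qed.

Lemma normL (Y : 'M[R]_(D, N)) (R0 : 'M[R]_(N, d)) (p : 'rV[R]_N) :
  R0^T *m diag_inv p *m R0 \in unitmx ->
  let L1 := Y *m diag_inv p *m R0 *m invmx (R0^T *m diag_inv p *m R0) in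
  (Y - L1 *m R0^T) *m diag_inv p *m R0 = 0.
Proof.
move=> U L1; rewrite mulmxBl mulmxBl.
have -> : L1 *m R0^T *m diag_inv p *m R0 = L1 *m (R0^T *m diag_inv p *m R0)
  by rewrite !mulmxA.
by rewrite /L1 mulmxKV // subrr.
Qed.

Lemma normR (Y : 'M[R]_(D, N)) (L1 : 'M[R]_(D, d)) :
  L1^T *m L1 \in unitmx ->
  let R1 := Y^T *m L1 *m invmx (L1^T *m L1) in
  L1^T *m (Y - L1 *m R1^T) = 0.
Proof.
move=> U R1; rewrite mulmxBr.
have -> : R1^T = invmx (L1^T *m L1) *m (L1^T *m Y).
  by rewrite /R1 trmx_mul trmx_inv trmx_mul trmxK trmx_mul trmxK.
by rewrite mulmxA mulKVmx // subrr.
Qed.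
Variable (Y : 'M[R]_(D, N)).
Definition Fof (w : var_t R D N d) : R :=
  2^-1 * (\sum_(i < D) \sum_(j < N) ((Y - w.1.1 *m w.1.2^T) i j) ^+ 2 / w.2 0 j)
  + D%:R / 2 * \sum_(j < N) ln (w.2 0 j).

Lemma Lstep (L0 : 'M[R]_(D, d)) (R0 : 'M[R]_(N, d)) (p : 'rV[R]_N) (L : 'M[R]_(D, d)) : (forall j, 0 < p 0 j) ->
  (Y - L0 *m R0^T) *m diag_inv p *m R0 = 0 -> Fof (L0, R0, p) <= Fof (L, R0, p).
Proof.
move=> pos G0; rewrite /Fof /= lerD2r ler_pM2l ?invr_gt0 //.
have -> : Y - L *m R0^T = (Y - L0 *m R0^T) - (L - L0) *m R0^T
  by rewrite mulmxBl opprB addrA subrK.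
apply: (quad_ge _ _ p pos).
rewrite cross_T3 cross1 G0; apply: big1 => i _; apply: big1 => k _.
by rewrite !mxE mulr0.
Qed.

Lemma Rstep (L1 : 'M[R]_(D, d)) (R1 Rm : 'M[R]_(N, d)) (p : 'rV[R]_N) : (forall j, 0 < p 0 j) ->
  L1^T *m (Y - L1 *m R1^T) = 0 -> Fof (L1, R1, p) <= Fof (L1, Rm, p).
Proof.
move=> pos G0; rewrite /Fof /= lerD2r ler_pM2l ?invr_gt0 //.
have -> : Y - L1 *m Rm^T = (Y - L1 *m R1^T) - L1 *m (Rm - R1)^T
  by rewrite linearB /= mulmxBr opprB addrA subrK.
apply: (quad_ge _ _ p pos).
rewrite cross_T3 cross2 G0; apply: big1 => j _; apply: big1 => k _.
by rewrite !mxE mulr0 mul0r.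
Qed.

Lemma FofE (L : 'M[R]_(D, d)) (Rm : 'M[R]_(N, d)) (p : 'rV[R]_N) : Fof (L, Rm, p) = \sum_j (2^-1 * ((\sum_i ((Y - L *m Rm^T) i j) ^+ 2) / p 0 j)
   + D%:R / 2 * ln (p 0 j)).
Proof.
rewrite /Fof /= exchange_big big_split /= -!mulr_sumr; congr (_ * _ + _).
by apply: eq_bigr => j _; rewrite mulr_suml.
Qed.

Lemma Pstep (eps : R) (L : 'M[R]_(D, d)) (Rm : 'M[R]_(N, d)) (p : 'rV[R]_N) : 0 < eps -> (0 < D)%N -> (forall j, eps <= p 0 j) ->
  Fof (L, Rm, \row_j Num.max (colres Y L Rm j) eps) <= Fof (L, Rm, p).
Proof.
move=> e0 D0 pe; rewrite !FofE; apply: ler_sum => j _; rewrite mxE /colres.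
apply: pi_step => //; last by rewrite ltr0n.
by apply: sumr_ge0 => i _; apply: sqr_ge0.
Qed.
Lemma fobjE : fobj Y = Fof.
Proof. by apply/funext => [[[L Rm] p]]. Qed.

Lemma diff_cL i k (w : var_t R D N d) : differentiable (fun w : var_t R D N d => w.1.1 i k) w.
Proof.
have h1 : differentiable (fun w : var_t R D N d => w.1.1) w
  := differentiable_comp (diff_fst _ _ w) (diff_fst _ _ _).
exact: (differentiable_comp h1 (differentiable_coord _ i k)).
Qed.
Lemma diff_cR i k (w : var_t R D N d) : differentiable (fun w : var_t R D N d => w.1.2 i k) w.
Proof.
have h1 : differentiable (fun w : var_t R D N d => w.1.2) w
  := differentiable_comp (diff_fst _ _ w) (diff_snd _ _ _).
exact: (differentiable_comp h1 (differentiable_coord _ i k)).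
Qed.
Lemma diff_cp j (w : var_t R D N d) : differentiable (fun w : var_t R D N d => w.2 0 j) w.
Proof.
exact: (differentiable_comp (diff_snd _ _ w) (differentiable_coord _ 0 j)).
Qed.

Lemma diff_fobj (w : var_t R D N d) : (forall j, 0 < w.2 0 j) -> differentiable (fobj Y) w.
Proof.
move=> pos; rewrite fobjE /Fof.
apply: dD; apply: dM; try apply: dC.
  apply: dS => i; apply: dS => j; apply: dM; last first.
    by apply: dV; [exact: diff_cp | exact: lt0r_neq0].
  apply: dX2.
  have -> : (fun w : var_t R D N d => (Y - w.1.1 *m w.1.2^T) i j) =
     (fun w : var_t R D N d => Y i j - \sum_k (w.1.1 i k * w.1.2 j k)).
    apply: boolp.funext => w' /=; rewrite !mxE; congr (_ - _); apply: eq_bigr => k _; by rewrite mxE.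
  apply: dB; first exact: dC.
  by apply: dS => k; apply: dM; [exact: diff_cL | exact: diff_cR].
by apply: dS => j; apply: dln; [exact: diff_cp | exact: pos].
Qed.
End A.
End S.
Theorem theorem2 (R : realType) (D N d : nat) (Y : 'M[R]_(D, N)) (eps : R)
  (U : 'M[R]_D) (s : nat -> R) (V : 'M[R]_N)
  (Lt : nat -> 'M[R]_(D, d)) (Rt : nat -> 'M[R]_(N, d)) (pt : nat -> 'rV[R]_N) :
  (* Y has centered columns: the sample mean of the columns is zero *)
  Y *m (const_mx 1 : 'cV[R]_N) = 0 ->
  (1 <= d)%N -> (d <= D)%N -> (d <= N)%N -> 0 < eps ->
  (* an SVD Y = U Sigma V' *)
  U^T *m U = 1%:M -> V^T *m V = 1%:M ->
  (forall k, 0 <= s k) -> (forall k, (k.+1 < minn D N)%N -> s k.+1 <= s k) ->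
  Y = U *m (\matrix_(i < D, j < N) if (i : nat) == j then s i else 0) *m V^T ->
  (* initialization *)
  Lt 0%N = U *m (\matrix_(i < D, k < d) if (i : nat) == k then Num.sqrt (s k) else 0) ->
  Rt 0%N = V *m (\matrix_(i < N, k < d) if (i : nat) == k then Num.sqrt (s k) else 0) ->
  pt 0%N = const_mx (Num.max (\big[Num.max/0]_(j < N) colres Y (Lt 0%N) (Rt 0%N) j) eps) ->
  (* the matrix inverses in the updates exist *)
  (forall t, (Rt t)^T *m diag_inv (pt t) *m Rt t \in unitmx) ->
  (forall t, (Lt t.+1)^T *m Lt t.+1 \in unitmx) ->
  (* alternating minimization updates *)
  (forall t, Lt t.+1 = Y *m diag_inv (pt t) *m Rt t
                         *m invmx ((Rt t)^T *m diag_inv (pt t) *m Rt t)) ->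
  (forall t, Rt t.+1 = Y^T *m Lt t.+1 *m invmx ((Lt t.+1)^T *m Lt t.+1)) ->
  (forall t, pt t.+1 = \row_j Num.max (colres Y (Lt t.+1) (Rt t.+1) j) eps) ->
  (* every limit point is a critical point *)
  forall (phi : nat -> nat) (ws : var_t R D N d),
    (forall n, (phi n < phi n.+1)%N) ->
    (fun n => (Lt (phi n), Rt (phi n), pt (phi n)) : var_t R D N d) @ \oo --> ws ->
    critical_point (fobj Y) (feas eps) ws.
Proof.
move=> Hc d1 dD dN e0 _ _ _ _ _ _ _ p0 U1 U2 HL HR HP phi [[Ls Rs] ps] phiS cv.
have D0 : (0 < D)%N by apply: leq_trans dD.
pose f := fobj (d:=d) Y.
have pos t j : eps <= pt t 0 j.
  case: t => [|t]; first by rewrite p0 mxE le_max lexx orbT.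
  by rewrite HP mxE le_max lexx orbT.
have posl t j : 0 < pt t 0 j by apply: lt_le_trans (pos t j).
have H1 t (L : 'M[R]_(D, d)) : f (Lt t.+1, Rt t, pt t) <= f (L, Rt t, pt t).
  rewrite /f fobjE; apply: Lstep => //; rewrite HL; exact: normL.
have H2 t (Rm : 'M[R]_(N, d)) (p : 'rV[R]_N) : (forall j, eps <= p 0 j) ->
    f (Lt t.+1, Rt t.+1, pt t.+1) <= f (Lt t.+1, Rm, p).
  move=> hp; rewrite /f fobjE.
  apply: (@le_trans _ _ (Fof D N d Y (Lt t.+1, Rt t.+1, p))).
    by rewrite HP; apply: Pstep.
  apply: Rstep; first by move=> j; apply: lt_le_trans (hp j).
  rewrite HR; exact: normR.
have mono t : f (Lt t.+1, Rt t.+1, pt t.+1) <= f (Lt t, Rt t, pt t).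
  exact: le_trans (H2 t _ _ (pos t)) (H1 t _).
have monoN k m : (k <= m)%N -> f (Lt m, Rt m, pt m) <= f (Lt k, Rt k, pt k).
  elim: m => [|m IH]; first by rewrite leqn0 => /eqP ->.
  rewrite leq_eqVlt => /orP [/eqP -> // | km].
  exact: le_trans (mono m) (IH km).
have cont (g : var_t R D N d -> R) : differentiable g (Ls, Rs, ps) ->
    (fun n => g (Lt (phi n), Rt (phi n), pt (phi n))) @ \oo --> g (Ls, Rs, ps).
  move=> dg; exact: (cvg_comp _ g cv (differentiable_continuous dg)).
have wpos j : eps <= ps 0 j.
  apply: (ler_cvg_to (cvg_cst eps) (cont _ (diff_cp _ _ _ j _))).
  by apply: nearW => n; exact: pos.
have wposl j : 0 < ps 0 j by apply: lt_le_trans (wpos j).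
have dfs : differentiable f (Ls, Rs, ps) by exact: diff_fobj.
have cfu : (fun n => f (Lt (phi n.+1), Rt (phi n.+1), pt (phi n.+1))) @ \oo --> f (Ls, Rs, ps).
  have := cont f dfs; rewrite -cvg_shiftS; exact.
have ClaimA (L : 'M[R]_(D, d)) : f (Ls, Rs, ps) <= f (L, Rs, ps).
  have dg : differentiable (fun w : var_t R D N d => f (L, w.1.2, w.2)) (Ls, Rs, ps).
    apply: (differentiable_comp (f := fun w : var_t R D N d => (L, w.1.2, w.2))).
      apply: differentiable_pair; last exact: diff_snd.
      apply: differentiable_pair; first exact: differentiable_cst.
      exact: (differentiable_comp (diff_fst _ _ _) (diff_snd _ _ _)).
    exact: diff_fobj.
  apply: (ler_cvg_to cfu (cont _ dg)).
  apply: nearW => n /=.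
  apply: le_trans (H1 (phi n) L).
  apply: le_trans (H2 (phi n) _ _ (pos _)).
  apply: monoN; exact: phiS.
have ClaimB (Rm : 'M[R]_(N, d)) (p : 'rV[R]_N) : (forall j, eps <= p 0 j) -> f (Ls, Rs, ps) <= f (Ls, Rm, p).
  move=> hp.
  have dg : differentiable (fun w : var_t R D N d => f (w.1.1, Rm, p)) (Ls, Rs, ps).
    apply: (differentiable_comp (f := fun w : var_t R D N d => (w.1.1, Rm, p))).
      apply: differentiable_pair; last exact: differentiable_cst.
      apply: differentiable_pair; last exact: differentiable_cst.
      exact: (differentiable_comp (diff_fst _ _ _) (diff_fst _ _ _)).
    apply: diff_fobj => j /=; exact: lt_le_trans (hp j).
  have cg : (fun n => f (Lt (phi n.+1), Rm, p)) @ \oo --> f (Ls, Rm, p).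
    have := cont _ dg; rewrite -cvg_shiftS; exact.
  apply: (ler_cvg_to cfu cg).
  apply: nearW => n /=.
  have : (0 < phi n.+1)%N := leq_ltn_trans (leq0n _) (phiS n).
  case: (phi n.+1) => [|t] // _.
  exact: H2.
split => //.
move=> [[a b] c] /= fw.
have -> : ((a, b, c) : var_t R D N d) - (Ls, Rs, ps)
    = ((a - Ls, 0), 0) + ((0, b - Rs), c - ps).
  have -> : ((a, b, c) : var_t R D N d) - (Ls, Rs, ps) = (a - Ls, b - Rs, c - ps) by [].
  have -> : (((a - Ls, 0), 0) : var_t R D N d) + ((0, b - Rs), c - ps)
      = ((a - Ls + 0, 0 + (b - Rs)), 0 + (c - ps)) by [].
  by rewrite addr0 !add0r.
rewrite linearD; apply: addr_ge0; apply: dir_ge0 => // h h0 h1.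
  have -> : h *: (((a - Ls, 0), 0) : var_t R D N d) + (Ls, Rs, ps)
      = (h *: (a - Ls) + Ls, Rs, ps).
    have -> : h *: (((a - Ls, 0), 0) : var_t R D N d)
        = ((h *: (a - Ls), h *: 0), h *: 0) by [].
    have -> : ((h *: (a - Ls), h *: 0, h *: 0) : var_t R D N d) + (Ls, Rs, ps)
        = ((h *: (a - Ls) + Ls, h *: 0 + Rs), h *: 0 + ps) by [].
    by rewrite !scaler0 !add0r.
  exact: ClaimA.
have -> : h *: (((0, b - Rs), c - ps) : var_t R D N d) + (Ls, Rs, ps)
    = (Ls, h *: (b - Rs) + Rs, h *: (c - ps) + ps).
  have -> : h *: (((0, b - Rs), c - ps) : var_t R D N d)
      = ((h *: 0, h *: (b - Rs)), h *: (c - ps)) by [].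
  have -> : ((h *: 0, h *: (b - Rs), h *: (c - ps)) : var_t R D N d) + (Ls, Rs, ps)
      = ((h *: 0 + Ls, h *: (b - Rs) + Rs), h *: (c - ps) + ps) by [].
  by rewrite !scaler0 !add0r.
apply: ClaimB => j; rewrite !mxE.
have t1 : 0 <= h * (c 0 j - eps) by rewrite mulr_ge0 ?subr_ge0 // ltW.
have t2 : 0 <= (1 - h) * (ps 0 j - eps) by rewrite mulr_ge0 ?subr_ge0.
lra.
Qed.
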